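(* Fix $\zeta\in Z$, a pair of monotone decreasing kinetic functions $(k_c,k_e)$ with associated numbers $\tau_\ell^{sc}$ and $\tau_v^{sc}=k_c(\tau_\ell^{sc})$, and $\tau_R\in(\tau_v^{\min},\tau_v^{sc}]$. Let $\hat\tau\in(\tau_\ell^{\min},\tau_\ell^{sc}]$ be the unique element of $\mathcal A_\ell$ with $p'(\tau_R)=\frac{p(\tau_R)-p(\hat\tau)-\zeta}{\tau_R-\hat\tau}$. Then there exists a continuous monotone increasing function $g_s:[\hat\tau,\tau_\ell^{sc}]\to[\tau_R,\tau_v^{sc}]$ such that for all $\tau\in[\hat\tau,\tau_\ell^{sc}]$ $$p'(g_s(\tau))=\frac{p(g_s(\tau))-p(\tau)-\zeta}{g_s(\tau)-\tau},$$ or equivalently $c(g_s(\tau))=s_c(\tau,g_s(\tau))$.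
   Context: Thermodynamic setting. Fix real numbers $0<\tau_\ell^{\min}<\tau_\ell^{\max}<\tau_v^{\min}$ and $\zeta^{\min}<0<\zeta^{\max}$. Set $\mathcal A_\ell=(\tau_\ell^{\min},\tau_\ell^{\max})$, $\mathcal A_v=(\tau_v^{\min},\infty)$ and $Z=(\zeta^{\min},\zeta^{\max})$. Let $p\in C^2(\mathcal A_\ell\cup\mathcal A_v)$ and $\psi,\mu\in C^3(\mathcal A_\ell\cup\mathcal A_v)$ with $p=-\psi'$ and $\mu=\psi+p\tau$. Assume: (H1) $p'<0$; (H2) $p''>0$ on $\mathcal A_\ell\cup\mathcal A_v$; (H3) for every $\zeta\in Z$ there exist $\tau_\ell^{sat}(\zeta)\in\mathcal A_\ell$, $\tau_v^{sat}(\zeta)\in\mathcal A_v$ with $p(\tau_v^{sat})-p(\tau_\ell^{sat})=\zeta$, $\mu(\tau_v^{sat})=\mu(\tau_\ell^{sat})$; (H4) $p(\tau)\to\infty$ as $\tau\to\tau_\ell^{\min}$; (H5) $p'(\tau_\ell)<p'(\tau_v)$ for all $\tau_\ell\in\mathcal A_\ell,\tau_v\in\mathcal A_v$; (H6) $\int_{\tau_v^{\min}}^R c\,d\tau\to\infty$ as $R\to\infty$, where $c(\tau)=\sqrt{-p'(\tau)}$. For the fixed $\zeta$ write $\tau_\ell^{sat}=\tau_\ell^{sat}(\zeta)$, $\tau_v^{sat}=\tau_v^{sat}(\zeta)$. Speeds: $s_e(\tau_\ell,\tau_v)=-\sqrt{\frac{\zeta-p(\tau_v)+p(\tau_\ell)}{\tau_v-\tau_\ell}}$,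 $s_c(\tau_\ell,\tau_v)=+\sqrt{\frac{\zeta-p(\tau_v)+p(\tau_\ell)}{\tau_v-\tau_\ell}}$. Driving force: $f(\tau_\ell,\tau_v)=\psi(\tau_v)-\psi(\tau_\ell)+(\tau_v-\tau_\ell)\frac{p(\tau_\ell)+p(\tau_v)}2+\zeta\frac{\tau_\ell+\tau_v}2$. Pair of monotone decreasing kinetic functions: given numbers $\tau_\ell^{sc}\in(\tau_\ell^{\min},\tau_\ell^{sat})$, $\tau_v^{se}\in(\tau_v^{\min},\infty)$ and differentiable functions $k_c:[\tau_\ell^{sc},\tau_\ell^{sat}]\to\mathcal A_v$, $k_e:[\tau_v^{sat},\tau_v^{se}]\to\mathcal A_\ell$ such that $k_c'\le0$, $k_e'\le0$; $f(\tau_\ell,k_c(\tau_\ell))\ge0$ on $[\tau_\ell^{sc},\tau_\ell^{sat}]$ and $f(k_e(\tau_v),\tau_v)\le0$ on $[\tau_v^{sat},\tau_v^{se}]$; $k_c(\tau_\ell^{sat})=\tau_v^{sat}$, $k_c(\tau_\ell^{sc})=\tau_v^{sc}$ with $|s_c(\tau_\ell^{sc},\tau_v^{sc})|=c(\tau_v^{sc})$; $k_e(\tau_v^{sat})=\tau_\ell^{sat}$, $k_e(\tau_v^{se})=\tau_\ell^{se}$ with $|s_e(\tau_\ell^{se},\tau_v^{se})|=c(\tau_v^{se})$, and $k_e'(\tau_v^{se})=0$. *)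

(* Defs.v *)
From Stdlib Require Import Reals.
From Coquelicot Require Import Coquelicot.
Open Scope R_scope.

Definition A_l (tlmin tlmax : R) (x : R) : Prop := tlmin < x < tlmax.
Definition A_v (tvmin : R) (x : R) : Prop := tvmin < x.
Definition Dom (tlmin tlmax tvmin : R) (x : R) : Prop :=
  A_l tlmin tlmax x \/ A_v tvmin x.

(* C^2 / C^3 on an open set D (pointwise; D is open so this is the usual notion). *)
Definition C2_on (D : R -> Prop) (f : R -> R) : Prop :=
  forall x, D x ->
    ex_derive f x /\ ex_derive (Derive f) x /\ continuous (Derive (Derive f)) x.
Definition C3_on (D : R -> Prop) (f : R -> R) : Prop :=
  forall x, D x ->
    ex_derive f x /\ ex_derive (Derive f) x /\ ex_derive (Derive (Derive f)) x /\
    continuous (Derive (Derive (Derive f))) x.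

Definition sound (p : R -> R) (t : R) : R := sqrt (- Derive p t).

Definition s_e (p : R -> R) (zeta tl tv : R) : R :=
  - sqrt ((zeta - p tv + p tl) / (tv - tl)).
Definition s_c (p : R -> R) (zeta tl tv : R) : R :=
  sqrt ((zeta - p tv + p tl) / (tv - tl)).
Definition drive (p psi : R -> R) (zeta tl tv : R) : R :=
  psi tv - psi tl + (tv - tl) * ((p tl + p tv) / 2) + zeta * ((tl + tv) / 2).

Definition derive_on_interval (a b : R) (f : R -> R) (x l : R) : Prop :=
  filterlim (fun y => (f y - f x) / (y - x))
    (within (fun y => a <= y <= b /\ y <> x) (locally x)) (locally l).

(* Standing thermodynamic assumptions (H1)-(H6); tlsat, tvsat are the
   saturation maps zeta |-> tau_l^sat(zeta), tau_v^sat(zeta) of (H3). *)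
Definition thermo_setting (tlmin tlmax tvmin zmin zmax : R)
    (p psi mu tlsat tvsat : R -> R) : Prop :=
  0 < tlmin /\ tlmin < tlmax /\ tlmax < tvmin /\ zmin < 0 /\ 0 < zmax /\
  C2_on (Dom tlmin tlmax tvmin) p /\
  C3_on (Dom tlmin tlmax tvmin) psi /\
  C3_on (Dom tlmin tlmax tvmin) mu /\
  (forall t, Dom tlmin tlmax tvmin t -> p t = - Derive psi t) /\
  (forall t, Dom tlmin tlmax tvmin t -> mu t = psi t + p t * t) /\
  (forall t, Dom tlmin tlmax tvmin t -> Derive p t < 0) /\
  (forall t, Dom tlmin tlmax tvmin t -> Derive (Derive p) t > 0) /\
  (forall z, zmin < z < zmax ->
                A_l tlmin tlmax (tlsat z) /\ A_v tvmin (tvsat z) /\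
                p (tvsat z) - p (tlsat z) = z /\ mu (tvsat z) = mu (tlsat z)) /\
  filterlim p (at_right tlmin) (Rbar_locally p_infty) /\
  (forall tl tv, A_l tlmin tlmax tl -> A_v tvmin tv ->
                Derive p tl < Derive p tv) /\
  (* (H6) the (possibly improper at tvmin) integral int_{tvmin}^R c of the
     nonnegative function c tends to +oo: for c >= 0 its value is the sup
     over a in (tvmin,R) of int_a^R c. *)
  (forall M : R, exists R0 : R, forall Rr, R0 <= Rr ->
      exists a, tvmin < a < Rr /\ M <= RInt (sound p) a Rr).

(* A pair of monotone decreasing kinetic functions (k_c, k_e) for zeta, with
   derivatives dkc, dke on the closed intervals, tvsat := tvsat zeta etc. *)
Definition kinetic_pair (tlmin tlmax tvmin : R) (p psi : R -> R) (zeta tlsat tvsat : R)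
    (tlsc tvse : R) (kc ke dkc dke : R -> R) : Prop :=
  tlmin < tlsc < tlsat /\ tvmin < tvse /\ tvsat <= tvse /\
  (forall x, tlsc <= x <= tlsat ->
     A_v tvmin (kc x) /\ derive_on_interval tlsc tlsat kc x (dkc x) /\ dkc x <= 0 /\
     drive p psi zeta x (kc x) >= 0) /\
  (forall x, tvsat <= x <= tvse ->
     A_l tlmin tlmax (ke x) /\ derive_on_interval tvsat tvse ke x (dke x) /\
     dke x <= 0 /\ drive p psi zeta (ke x) x <= 0) /\
  kc tlsat = tvsat /\
  Rabs (s_c p zeta tlsc (kc tlsc)) = sound p (kc tlsc) /\
  ke tvsat = tlsat /\
  Rabs (s_e p zeta (ke tvse) tvse) = sound p tvse /\
  dke tvse = 0.

(* Main.v *)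
Require Import Defs.
From Stdlib Require Import Reals Lra Ranalysis5 ClassicalEpsilon Classical.
From Coquelicot Require Import Coquelicot.
Open Scope R_scope.

Lemma ball_R (x y : R) (e : R) : @ball R_UniformSpace x e y <-> Rabs (y - x) < e.
Proof. reflexivity. Qed.

Lemma mvt (f : R -> R) a b (Hab : a < b) (H : forall x, a <= x <= b -> ex_derive f x) :
  exists c, a <= c <= b /\ f b - f a = Derive f c * (b - a).
Proof.
  destruct (MVT_gen f a b (Derive f)) as [c [Hc He]].
  - intros x Hx. rewrite Rmin_left in Hx by lra. rewrite Rmax_right in Hx by lra.
    apply Derive_correct, H; lra.
  - intros x Hx. rewrite Rmin_left in Hx by lra. rewrite Rmax_right in Hx by lra.
    apply continuity_pt_filterlim. apply (ex_derive_continuous (V:=R_NormedModule)), H; lra.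
  - rewrite Rmin_left in Hc by lra. rewrite Rmax_right in Hc by lra.
    exists c; split; auto.
Qed.

Lemma cont_eps (f : R -> R) x : continuous f x ->
  forall m, 0 < m -> exists d, 0 < d /\ forall y, Rabs (y - x) < d -> Rabs (f y - f x) < m.
Proof.
  intros Hc m Hm.
  destruct (proj1 (filterlim_locally f (f x)) Hc (mkposreal m Hm)) as [d Hd].
  exists d. split. apply cond_pos. intros y Hy. apply (Hd y). exact Hy.
Qed.

Definition hf (p : R -> R) zeta t g := p g - p t - zeta - Derive p g * (g - t).

Lemma dpinc (p : R -> R) tvmin
  (HD : forall x, tvmin < x -> ex_derive p x /\ ex_derive (Derive p) x /\ Derive (Derive p) x > 0) :
  forall a b, tvmin < a < b -> Derive p a < Derive p b.
Proof.
  intros a b Hab.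
  destruct (mvt (Derive p) a b) as [c [Hc He]]; try lra.
  intros x Hx; apply HD; lra.
  assert (Derive (Derive p) c > 0) by (apply HD; lra).
  assert (0 < Derive (Derive p) c * (b - a)) by (apply Rmult_lt_0_compat; lra).
  lra.
Qed.

Lemma hdec (p : R -> R) zeta tvmin t
  (HD : forall x, tvmin < x -> ex_derive p x /\ ex_derive (Derive p) x /\ Derive (Derive p) x > 0)
  (Ht : t < tvmin) :
  forall a b, tvmin < a < b -> hf p zeta t b < hf p zeta t a.
Proof.
  intros a b Hab. unfold hf.
  destruct (mvt p a b) as [c [Hc He]]; try lra.
  intros x Hx; apply HD; lra.
  assert (Derive p c <= Derive p b).
  { destruct (Req_dec c b). subst; lra. left; apply (dpinc p tvmin HD); lra. }
  assert (Derive p a < Derive p b) by (apply (dpinc p tvmin HD); lra).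
  assert (Derive p c * (b - a) <= Derive p b * (b - a)) by (apply Rmult_le_compat_r; lra).
  assert (0 < (Derive p b - Derive p a) * (a - t)) by (apply Rmult_lt_0_compat; lra).
  nra.
Qed.

Lemma hinc (p : R -> R) zeta tlmin tlmax g
  (HL : forall x, tlmin < x < tlmax -> ex_derive p x)
  (H5 : forall c, tlmin < c < tlmax -> Derive p c < Derive p g) :
  forall a b, tlmin < a < b -> b < tlmax -> hf p zeta a g < hf p zeta b g.
Proof.
  intros a b Hab Hb. unfold hf.
  destruct (mvt p a b) as [c [Hc He]]; try lra.
  intros x Hx; apply HL; lra.
  assert (Derive p c < Derive p g) by (apply H5; lra).
  assert (0 < (Derive p g - Derive p c) * (b - a)) by (apply Rmult_lt_0_compat; lra).
  nra.
Qed.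

Lemma hcont (p : R -> R) zeta x g : continuous p x ->
  forall m, 0 < m -> exists d, 0 < d /\ forall y, Rabs (y - x) < d ->
     Rabs (hf p zeta y g - hf p zeta x g) < m.
Proof.
  intros Hc m Hm.
  destruct (cont_eps p x Hc (m/2)) as [d1 [Hd1 H1]]; try lra.
  set (K := Rabs (Derive p g) + 1).
  assert (HK : 0 < K) by (unfold K; pose proof (Rabs_pos (Derive p g)); lra).
  exists (Rmin d1 (m / 2 / K)). split.
  apply Rmin_pos; auto. apply Rdiv_lt_0_compat; lra.
  intros y Hy.
  assert (Hy1 : Rabs (y - x) < d1) by (eapply Rlt_le_trans; [exact Hy| apply Rmin_l]).
  assert (Hy2 : Rabs (y - x) < m/2/K) by (eapply Rlt_le_trans; [exact Hy| apply Rmin_r]).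
  specialize (H1 y Hy1).
  unfold hf.
  replace (p g - p y - zeta - Derive p g * (g - y) - (p g - p x - zeta - Derive p g * (g - x)))
    with (- (p y - p x) + Derive p g * (y - x)) by ring.
  eapply Rle_lt_trans. apply Rabs_triang. rewrite Rabs_Ropp, Rabs_mult.
  assert (Rabs (Derive p g) * Rabs (y - x) <= K * Rabs (y - x)).
  { apply Rmult_le_compat_r. apply Rabs_pos. unfold K; lra. }
  assert (K * Rabs (y - x) < K * (m/2/K)) by (apply Rmult_lt_compat_l; auto).
  replace (K * (m/2/K)) with (m/2) in * by (field; lra).
  lra.
Qed.

Theorem lemma3p6
  (tlmin tlmax tvmin zmin zmax : R) (p psi mu tlsat tvsat : R -> R)
  (Hth : thermo_setting tlmin tlmax tvmin zmin zmax p psi mu tlsat tvsat)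
  (zeta : R) (Hz : zmin < zeta < zmax)
  (tlsc tvse : R) (kc ke dkc dke : R -> R)
  (Hk : kinetic_pair tlmin tlmax tvmin p psi zeta (tlsat zeta) (tvsat zeta)
          tlsc tvse kc ke dkc dke)
  (tR : R) (HtR : tvmin < tR <= kc tlsc)
  (that : R) (Hthat : tlmin < that <= tlsc)
  (Hthat_eq : Derive p tR = (p tR - p that - zeta) / (tR - that))
  (Hthat_uniq : forall t, A_l tlmin tlmax t ->
      Derive p tR = (p tR - p t - zeta) / (tR - t) -> t = that) :
  exists gs : R -> R,
    (forall x, that <= x <= tlsc ->
       filterlim gs (within (fun y => that <= y <= tlsc) (locally x)) (locally (gs x))) /\
    (forall x y, that <= x <= tlsc -> that <= y <= tlsc -> x <= y -> gs x <= gs y) /\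
    (forall x, that <= x <= tlsc ->
       tR <= gs x <= kc tlsc /\
       Derive p (gs x) = (p (gs x) - p x - zeta) / (gs x - x)).
Proof.
  destruct Hth as (H0 & Hlm & Hlv & _ & _ & HC2 & _ & _ & _ & _ & H1 & H2 & H3 & _ & H5 & _).
  destruct Hk as (Hsc & _ & _ & Hkc & _ & _ & Hsound & _).
  destruct (H3 zeta Hz) as ([_ Hsat] & _).
  set (tvsc := kc tlsc) in *.
  assert (Hvsc : tvmin < tvsc) by (apply (Hkc tlsc); lra).
  assert (HD : forall x, tvmin < x -> ex_derive p x /\ ex_derive (Derive p) x /\ Derive (Derive p) x > 0).
  { intros x Hx. assert (Dom tlmin tlmax tvmin x) by (right; exact Hx).
    destruct (HC2 x H) as [? [? _]]. repeat split; auto. }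
  assert (HL : forall x, tlmin < x < tlmax -> ex_derive p x).
  { intros x Hx. apply HC2. left. exact Hx. }
  assert (H5' : forall g, tvmin < g -> forall c, tlmin < c < tlmax -> Derive p c < Derive p g).
  { intros g Hg c Hc. apply H5; [exact Hc| exact Hg]. }
  assert (Hend : hf p zeta tlsc tvsc = 0).
  { unfold s_c, sound in Hsound. fold tvsc in Hsound.
    rewrite Rabs_pos_eq in Hsound by apply sqrt_pos.
    assert (Hneg : 0 < - Derive p tvsc) by (assert (Derive p tvsc < 0) by (apply H1; right; auto); lra).
    set (A := (zeta - p tvsc + p tlsc) / (tvsc - tlsc)) in Hsound.
    assert (HA : 0 <= A).
    { destruct (Rle_or_lt A 0) as [Hle|]; [|lra].
      rewrite (sqrt_neg_0 A Hle) in Hsound. pose proof (sqrt_lt_R0 _ Hneg). lra. }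
    apply sqrt_inj in Hsound; try lra.
    unfold A in Hsound. unfold hf.
    assert (Hd : tvsc - tlsc <> 0) by lra.
    assert (zeta - p tvsc + p tlsc = - Derive p tvsc * (tvsc - tlsc)).
    { rewrite <- Hsound. field. exact Hd. }
    lra. }
  assert (Hstart : hf p zeta that tR = 0).
  { unfold hf. rewrite Hthat_eq. field. lra. }
  assert (Ex : forall x, {g | that <= x <= tlsc -> (tR <= g <= tvsc /\ hf p zeta x g = 0)}).
  { intro x. apply constructive_indefinite_description.
    destruct (classic (that <= x <= tlsc)) as [Hx|Hx]; [|exists tR; tauto].
    assert (Ha : 0 <= hf p zeta x tR).
    { destruct (Req_dec x that). subst; lra.
      left. rewrite <- Hstart. apply (hinc p zeta tlmin tlmax tR HL (H5' tR ltac:(lra))); lra. }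
    assert (Hb : hf p zeta x tvsc <= 0).
    { destruct (Req_dec x tlsc). subst; lra.
      left. rewrite <- Hend. apply (hinc p zeta tlmin tlmax tvsc HL (H5' tvsc Hvsc)); lra. }
    destruct (Req_dec (hf p zeta x tR) 0) as [E1|E1].
    { exists tR. intros; split; [lra|auto]. }
    destruct (Req_dec (hf p zeta x tvsc) 0) as [E2|E2].
    { exists tvsc. intros; split; [lra|auto]. }
    assert (Hlt : tR < tvsc).
    { destruct (Req_dec tR tvsc); [|lra]. rewrite H in Ha. lra. }
    destruct (Ranalysis5.IVT_interv (fun g => - hf p zeta x g) tR tvsc) as [z [Hz1 Hz2]].
    - intros a Ha'. apply continuity_pt_filterlim.
      assert (Hax : tvmin < a) by lra.
      destruct (HD a Hax) as [Hd1 [Hd2 _]].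
      unfold hf.
      apply (continuous_opp (V:=R_NormedModule) (fun g => p g - p x - zeta - Derive p g * (g - x))).
      apply (continuous_minus (V:=R_NormedModule) (fun g => p g - p x - zeta) (fun g => Derive p g * (g - x))).
      apply (continuous_minus (V:=R_NormedModule) (fun g => p g - p x) (fun _ => zeta)).
      apply (continuous_minus (V:=R_NormedModule) p (fun _ => p x)).
      apply (ex_derive_continuous (V:=R_NormedModule)); auto.
      apply continuous_const. apply continuous_const.
      apply (continuous_mult (K:=R_AbsRing) (Derive p) (fun g => g - x)).
      apply (ex_derive_continuous (V:=R_NormedModule)); auto.
      apply (continuous_minus (V:=R_NormedModule) (fun g => g) (fun _ => x)).
      apply continuous_id. apply continuous_const.
    - exact Hlt.
    - lra.
    - lra.
    - exists z. intros; split; [lra|lra]. }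
  set (gs := fun x => proj1_sig (Ex x)).
  assert (Hgs : forall x, that <= x <= tlsc -> tR <= gs x <= tvsc /\ hf p zeta x (gs x) = 0).
  { intros x Hx. unfold gs. destruct (Ex x) as [g Hg]. simpl. auto. }
  assert (Hcmp : forall x g, that <= x <= tlsc -> tvmin < g ->
            (hf p zeta x g < 0 -> g > gs x) /\ (hf p zeta x g > 0 -> g < gs x)).
  { intros x g Hx Hg. destruct (Hgs x Hx) as [Hr Hh].
    split; intro Hs; destruct (Rtotal_order g (gs x)) as [Hc|[Hc|Hc]]; auto.
    - pose proof (hdec p zeta tvmin x HD ltac:(lra) g (gs x) ltac:(lra)). lra.
    - subst; lra.
    - subst; lra.
    - pose proof (hdec p zeta tvmin x HD ltac:(lra) (gs x) g ltac:(lra)). lra. }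
  exists gs. split; [|split].
  -
    intros x Hx. apply filterlim_locally. intros eps.
    destruct (Hgs x Hx) as [Hr Hh].
    assert (Hpc : continuous p x) by (apply (ex_derive_continuous (V:=R_NormedModule)); apply HL; lra).
    assert (Up : exists d, 0 < d /\ forall y, Rabs (y - x) < d -> that <= y <= tlsc -> gs y < gs x + eps).
    { destruct (Rlt_or_le tvsc (gs x + eps/2)) as [Hc|Hc].
      - exists 1. split; [lra|]. intros y _ Hy. destruct (Hgs y Hy). pose proof (cond_pos eps). lra.
      - set (g1 := gs x + eps/2).
        assert (Hg1 : hf p zeta x g1 < 0).
        { rewrite <- Hh. apply (hdec p zeta tvmin x HD ltac:(lra)). pose proof (cond_pos eps). unfold g1; lra. }
        destruct (hcont p zeta x g1 Hpc (- hf p zeta x g1)) as [d [Hd Hdd]]; [lra|].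
        exists d. split; auto. intros y Hy Hyi.
        specialize (Hdd y Hy). apply Rabs_def2 in Hdd.
        assert (hf p zeta y g1 < 0) by lra.
        assert (g1 > gs y) by (apply (Hcmp y g1 Hyi); auto; pose proof (cond_pos eps); unfold g1; lra).
        unfold g1 in *; pose proof (cond_pos eps); lra. }
    assert (Lo : exists d, 0 < d /\ forall y, Rabs (y - x) < d -> that <= y <= tlsc -> gs x - eps < gs y).
    { destruct (Rlt_or_le (gs x - eps/2) tR) as [Hc|Hc].
      - exists 1. split; [lra|]. intros y _ Hy. destruct (Hgs y Hy). pose proof (cond_pos eps). lra.
      - set (g1 := gs x - eps/2).
        assert (Hg1 : hf p zeta x g1 > 0).
        { rewrite <- Hh. apply (hdec p zeta tvmin x HD ltac:(lra)). pose proof (cond_pos eps). unfold g1; lra. }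
        destruct (hcont p zeta x g1 Hpc (hf p zeta x g1)) as [d [Hd Hdd]]; [lra|].
        exists d. split; auto. intros y Hy Hyi.
        specialize (Hdd y Hy). apply Rabs_def2 in Hdd.
        assert (hf p zeta y g1 > 0) by lra.
        assert (g1 < gs y) by (apply (Hcmp y g1 Hyi); auto; unfold g1; lra).
        unfold g1 in *; pose proof (cond_pos eps); lra. }
    destruct Up as [d1 [Hd1 Hu]]. destruct Lo as [d2 [Hd2 Hl]].
    exists (mkposreal (Rmin d1 d2) (Rmin_pos _ _ Hd1 Hd2)).
    intros y Hy Hyi. apply ball_R in Hy. simpl in Hy. apply ball_R.
    assert (Rabs (y - x) < d1) by (eapply Rlt_le_trans; [exact Hy| apply Rmin_l]).
    assert (Rabs (y - x) < d2) by (eapply Rlt_le_trans; [exact Hy| apply Rmin_r]).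
    specialize (Hu y H Hyi). specialize (Hl y H4 Hyi).
    apply Rabs_def1; lra.
  - intros x y Hx Hy Hxy.
    destruct (Req_dec x y) as [E|E]. subst; lra.
    destruct (Rle_or_lt (gs x) (gs y)) as [|Hc]; auto.
    destruct (Hgs x Hx) as [Hrx Hhx]. destruct (Hgs y Hy) as [Hry Hhy].
    pose proof (hinc p zeta tlmin tlmax (gs x) HL (H5' (gs x) ltac:(lra)) x y ltac:(lra) ltac:(lra)).
    pose proof (hdec p zeta tvmin y HD ltac:(lra) (gs y) (gs x) ltac:(lra)).
    lra.
  - intros x Hx. destruct (Hgs x Hx) as [Hr Hh]. split; auto.
    unfold hf in Hh. field_simplify_eq; [|lra]. lra.
Qed.
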